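(* Let $m_1 \ge 0$ and let $\mathbf m=[m_2,m_3,\ldots]$ be a sequence of nonnegative integers with finitely many nonzero entries. Put $E = m_1 + 1 + 2m_2 + 3m_3 + 4m_4 + \cdots$ and $V = 2 + m_2 + 2m_3 + 3m_4 + \cdots$. Then the number $R_{m_1;\mathbf m}$ of tubdigons of type $[m_1;\mathbf m]$ equals $$R_{m_1;\mathbf m} = \frac{(E-1)!}{(V-1)!\; m_1!\; m_2!\, m_3! \cdots}.$$
   Context: Tubdigons are the formal expressions generated as follows: the null tubdigon $|$ is a tubdigon, and for every integer $k\ge 1$ and tubdigons $s_1,\ldots,s_k$, the expression $\nabla_k(s_1,\ldots,s_k)$ is a tubdigon (two tubdigons are equal iff they are identical expressions). Geometrically, $\nabla_k(s_1,\ldots,s_k)$ is a roofed $(k+1)$-gon (a 2-gon when $k=1$) with $s_1,\ldots,s_k$ glued along their roofs to its non-roof sides in counterclockwise order; so tubdigons are roofed convex polygons subdivided by non-crossing diagonals into polygons, where 2-gons (doubled edges) are also allowed. The type of a tubdigon is $[m_1;m_2,m_3,\ldots]$ where $m_k$ is the number of occurrences of $\nabla_k$ (the number of $(k+1)$-gon faces). Such a tubdigon has $E$ edges and $V$ vertices as defined in the claim. *)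

(* Defs.v *)
From Stdlib Require Import List.
From mathcomp Require Import all_boot.

Set Implicit Arguments.
Unset Strict Implicit.
Unset Printing Implicit Defensive.

(* Tubdigons: the null tubdigon | (Null), and nabla_k(s_1,...,s_k) for k >= 1,
   represented as Nabla s_1 [:: s_2; ...; s_k], so that k = 1 + size of the list. *)
Inductive tubdigon : Type :=
| Null : tubdigon
| Nabla : tubdigon -> seq tubdigon -> tubdigon.

Definition nabla_arity (s1 : tubdigon) (ss : seq tubdigon) : nat := (size ss).+1.

Fixpoint occ (k : nat) (t : tubdigon) : nat :=
  match t with
  | Null => 0
  | Nabla s1 ss => (k == nabla_arity s1 ss) + occ k s1 + sumn (map (occ k) ss)
  end.

(* t has type [m1; ms] where ms = [:: m_2; m_3; ...] (entries beyond size ms are 0). *)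
Definition has_type (m1 : nat) (ms : seq nat) (t : tubdigon) : Prop :=
  occ 1 t = m1 /\ forall k, 2 <= k -> occ k t = nth 0 ms (k - 2).

Definition E_of (m1 : nat) (ms : seq nat) : nat :=
  m1 + 1 + \sum_(i < size ms) (i + 2) * nth 0 ms i.

Definition V_of (ms : seq nat) : nat :=
  2 + \sum_(i < size ms) (i + 1) * nth 0 ms i.

(* Main.v *)
Require Import Defs.
From Stdlib Require Import List.
From mathcomp Require Import all_boot.
From HB Require Import structures.
From mathcomp Require Import zify.
Set Implicit Arguments. Unset Strict Implicit. Unset Printing Implicit Defensive.

Fixpoint tind (P : tubdigon -> Prop) (HN : P Null)
  (HC : forall s ss, P s -> List.Forall P ss -> P (Nabla s ss)) (t : tubdigon) : P t :=
  match t with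
  | Null => HN
  | Nabla s ss => HC s ss (tind HN HC s)
      ((fix F (l : list tubdigon) : List.Forall P l :=
          match l with nil => List.Forall_nil _ | cons x l' => List.Forall_cons _ (tind HN HC x) (F l') end) ss)
  end.

Fixpoint enc (t : tubdigon) : GenTree.tree nat :=
  match t with
  | Null => GenTree.Node 0 [::]
  | Nabla s ss => GenTree.Node 1 (enc s :: map enc ss)
  end.
Fixpoint dec (g : GenTree.tree nat) : tubdigon :=
  match g with
  | GenTree.Node 1 (x :: xs) => Nabla (dec x) (map dec xs)
  | _ => Null
  end.
Lemma encK : cancel enc dec.
Proof.
elim/tind => //= s ss IH H; rewrite IH; congr Nabla.
elim: H => //= x l Hx _ ->; by rewrite Hx.
Qed.
HB.instance Definition _ := Equality.copy tubdigon (can_type encK).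

Fixpoint leaves (t : tubdigon) : nat :=
  match t with Null => 1 | Nabla s ss => leaves s + sumn (map leaves ss) end.
Definition nodes k t := if k == 0 then leaves t else occ k t.
Lemma nodesN k : nodes k Null = (k == 0).
Proof. by case: k. Qed.
Lemma nodesC k s ss : nodes k (Nabla s ss) =
  (k == (size ss).+1) + nodes k s + sumn (map (nodes k) ss).
Proof.
rewrite /nodes; case: k => [|k] //=; congr (_ + _); congr sumn; apply: eq_map.
Qed.
Definition fn k (f : seq tubdigon) := sumn (map (nodes k) f).
Lemma fn_cat k f g : fn k (f ++ g) = fn k f + fn k g.
Proof. by rewrite /fn map_cat sumn_cat. Qed.
Lemma fn_cons k t f : fn k (t :: f) = nodes k t + fn k f.
Proof. by []. Qed.

Definition decr (v : seq nat) i := set_nth 0 v i (nth 0 v i).-1.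
Lemma nth_decr v i k : nth 0 (decr v i) k = nth 0 v k - (k == i).
Proof.
rewrite /decr nth_set_nth /=; case: eqP => [->|]; last by rewrite subn0.
by rewrite subn1.
Qed.
Lemma size_decr v i : i < size v -> size (decr v i) = size v.
Proof. by move=> H; rewrite /decr size_set_nth; apply/maxn_idPr. Qed.
Lemma lt_size v i : 0 < nth 0 v i -> i < size v.
Proof. by move=> H; rewrite ltnNge; apply/negP => /(nth_default 0) E; rewrite E in H. Qed.

Definition P (v : seq nat) := \prod_(x <- v) x`!.
Lemma decrP v i : 0 < nth 0 v i ->
  [/\ (sumn (decr v i)).+1 = sumn v & P (decr v i) * nth 0 v i = P v].
Proof.
rewrite /P /decr; elim: v i => [|x v IH] [|i] //=.
- case: x => // x _; rewrite !big_cons /=; split; first by rewrite addSn.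
  by rewrite mulnAC factS [x`! * _]mulnC.
- move=> /IH [H1 H2]; rewrite !big_cons; split; first by rewrite -H1 addnS.
  by rewrite -mulnA H2.
Qed.

Definition wsum (v : seq nat) := \sum_(i <- iota 0 (size v)) i * nth 0 v i.
Lemma wsum_decr v i : 0 < nth 0 v i -> wsum (decr v i) + i = wsum v.
Proof.
move=> Hv; have Hi := lt_size Hv.
have Hm : i \in iota 0 (size v) by rewrite mem_iota.
rewrite /wsum size_decr // !(bigD1_seq i) ?iota_uniq //=.
rewrite (eq_bigr (fun j => j * nth 0 v j)); last first.
  by move=> j /negbTE Hj; rewrite nth_decr Hj subn0.
rewrite nth_decr eqxx addnAC; congr (_ + _).
rewrite subn1 -mulnSr prednK //.
Qed.

Lemma sumn_iota v : sumn v = \sum_(i <- iota 0 (size v)) nth 0 v i.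
Proof.
rewrite sumnE (big_nth 0) /index_iota subn0 //.
Qed.

Lemma sumn0_nth v k : sumn v = 0 -> nth 0 v k = 0.
Proof.
elim: v k => [|x v IH] [|k] //=; first by move/eqP; rewrite addn_eq0 => /andP[/eqP].
by move/eqP; rewrite addn_eq0 => /andP[_ /eqP /IH].
Qed.
Lemma sumn0_P v : sumn v = 0 -> P v = 1.
Proof.
rewrite /P; elim: v => [|x v IH] /=; first by rewrite big_nil.
move/eqP; rewrite addn_eq0 => /andP[/eqP -> /eqP /IH]; by rewrite big_cons => ->.
Qed.

Definition build (i : nat) (g : seq tubdigon) : seq tubdigon :=
  match i, g with
  | 0, _ => Null :: g
  | j.+1, s :: r => Nabla s (take j r) :: drop j r
  | _.+1, [::] => [::]
  end.
Definition unbuild (f : seq tubdigon) : seq tubdigon :=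
  match f with Null :: r => r | Nabla s l :: r => s :: l ++ r | [::] => [::] end.
Definition arity (f : seq tubdigon) : nat :=
  match f with Nabla _ l :: _ => (size l).+1 | _ => 0 end.
Lemma buildK i g : i <= size g -> unbuild (build i g) = g /\ arity (build i g) = i.
Proof.
case: i => [|j] //; case: g => [|s r] //= H.
rewrite ltnS in H; by rewrite cat_take_drop size_take_min; split => //; rewrite (minn_idPl H).
Qed.

Fixpoint gen (n c : nat) (v : seq nat) : seq (seq tubdigon) :=
  match n with
  | 0 => if c == 0 then [:: [::]] else [::]
  | n'.+1 => if c == 0 then [::] else
      [seq build i g | i <- [seq i <- iota 0 (size v) | 0 < nth 0 v i],
                       g <- gen n' (c.-1 + i) (decr v i)]
  end.

Lemma fn_nil k : fn k [::] = 0. Proof. by []. Qed.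

Lemma gen_spec n : forall c v f, sumn v = n ->
  (f \in gen n c v <-> (size f = c /\ forall k, fn k f = nth 0 v k)).
Proof.
elim: n => [|n IH] c v f Hs.
  split.
    rewrite /=; case: eqP => // -> ; rewrite inE => /eqP -> ; split => // k.
    by rewrite sumn0_nth.
  case: f => [|t f] [Hsz Hk] /=.
    by rewrite -Hsz /= inE.
  exfalso; clear Hsz; case: t Hk => [|s ss] Hk.
    by move: (Hk 0); rewrite sumn0_nth // fn_cons nodesN.
  by move: (Hk (size ss).+1); rewrite sumn0_nth // fn_cons nodesC eqxx.
split.
  rewrite /=; case: eqP => // /eqP Hc /allpairsPdep [i [g [Hi Hg ->]]].
  move: Hi; rewrite mem_filter mem_iota /= => /andP [Hvi Hisz].
  have [Hs' _] := decrP Hvi.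
  have Hn : sumn (decr v i) = n by apply: succn_inj; rewrite Hs' Hs.
  have [/(_ Hg) [Hsg Hkg] _] := IH (c.-1 + i) _ g Hn.
  clear Hs' Hn; case: i Hvi Hisz Hg Hsg Hkg => [|j] Hvi Hisz Hg Hsg Hkg.
    split; first by rewrite /= Hsg addn0 prednK // lt0n.
    move=> k; rewrite /= fn_cons nodesN Hkg nth_decr.
    by case: eqP => [-> | _] /=; [rewrite add1n subn1 prednK | rewrite subn0].
  case: g Hg Hsg Hkg => [|s r] Hg Hsg Hkg; first by rewrite addnS in Hsg.
  have Hsr : size r = c.-1 + j by move: Hsg; rewrite /= addnS => [[]].
  have Hr : j <= size r by rewrite Hsr leq_addl.
  split.
    rewrite /= size_drop Hsr addnK prednK //.
    by rewrite lt0n.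
  move=> k; rewrite fn_cons nodesC size_takel //.
  have -> : sumn [seq nodes k i | i <- take j r] = fn k (take j r) by [].
  rewrite -!addnA -fn_cat cat_take_drop -fn_cons Hkg nth_decr.
  by case: eqP => [-> | _] /=; [rewrite add1n subn1 prednK | rewrite subn0].
case: f => [|t g] [Hsz Hk].
  exfalso; have : sumn v = 0.
    rewrite sumn_iota big_seq big1 // => i _; by rewrite -Hk.
  by rewrite Hs.
have Hc : c != 0 by rewrite -Hsz.
rewrite /= (negbTE Hc).
have Hp : forall i g', 0 < nth 0 v i -> build i g' = t :: g ->
   size g' = c.-1 + i -> (forall k, fn k g' = nth 0 (decr v i) k) -> t :: g \in
    [seq build i0 g0 | i0 <- [seq i0 <- iota 0 (size v) | 0 < nth 0 v i0],
                       g0 <- gen n (c.-1 + i0) (decr v i0)].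
  move=> i g' Hvi Hb Hsz' Hk'; rewrite -Hb; apply: allpairs_f_dep.
    by rewrite mem_filter Hvi mem_iota /= lt_size.
  have [Hs' _] := decrP Hvi.
  by apply/IH => //; apply: succn_inj; rewrite Hs' Hs.
case: t Hk Hsz Hp Hc => [|s ss] Hk Hsz Hp Hc.
  have Hv0 : 0 < nth 0 v 0 by rewrite -Hk fn_cons nodesN.
  apply: (Hp 0 g) => //; first by rewrite addn0 -Hsz.
  by move=> k; rewrite nth_decr -Hk fn_cons nodesN addKn.
have Hvi : 0 < nth 0 v (size ss).+1 by rewrite -Hk fn_cons nodesC eqxx.
apply: (Hp (size ss).+1 (s :: ss ++ g) Hvi).
- by rewrite /= take_size_cat // drop_size_cat.
- by rewrite /= size_cat -Hsz /= addnS addnC.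
- move=> k; rewrite nth_decr -Hk (fn_cons k (Nabla s ss)) nodesC fn_cons fn_cat.
  have -> : sumn [seq nodes k i | i <- ss] = fn k ss by []. by rewrite -!addnA addKn.
Qed.

Lemma wsum0 v : sumn v = 0 -> wsum v = 0.
Proof. by move=> H; rewrite /wsum big1 // => i _; rewrite sumn0_nth // muln0. Qed.

Lemma gen_bal n : forall c v f, sumn v = n -> f \in gen n c v -> c + wsum v = n.
Proof.
elim: n => [|n IH] c v f Hs.
  by rewrite /=; case: eqP => // -> _; rewrite wsum0.
rewrite /=; case: eqP => // /eqP Hc /allpairsPdep [i [g [Hi Hg _]]].
move: Hi; rewrite mem_filter mem_iota /= => /andP [Hvi Hisz].
have [Hs' _] := decrP Hvi.
have Hn : sumn (decr v i) = n by apply: succn_inj; rewrite Hs' Hs.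
have := IH _ _ _ Hn Hg; rewrite -(wsum_decr Hvi).
clear Hg; case: c Hc => // c _ /= H; lia.
Qed.

Lemma gen_uniq n : forall c v, sumn v = n -> uniq (gen n c v).
Proof.
elim: n => [|n IH] c v Hs; first by rewrite /=; case: eqP.
rewrite /=; case: eqP => // /eqP Hc; apply: allpairs_uniq_dep.
- by apply: filter_uniq; apply: iota_uniq.
- move=> i; rewrite mem_filter => /andP [Hvi _]; apply: IH.
  have [Hs' _] := decrP Hvi; by apply: succn_inj; rewrite Hs' Hs.
move=> [i1 g1] [i2 g2] /allpairsPdep [x1 [y1 [Hx1 Hy1 [E1 E2]]]]
   /allpairsPdep [x2 [y2 [Hx2 Hy2 [E3 E4]]]] /=.
subst x1 x2 y1 y2 => Hb.
have Hsz : forall i g, i \in [seq i <- iota 0 (size v) | 0 < nth 0 v i] ->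
   g \in gen n (c.-1 + i) (decr v i) -> i <= size g.
  move=> i g; rewrite mem_filter => /andP [Hvi _] Hg.
  have [Hs' _] := decrP Hvi.
  have Hn : sumn (decr v i) = n by apply: succn_inj; rewrite Hs' Hs.
  have [/(_ Hg) [-> _] _] := @gen_spec _ (c.-1 + i) _ g Hn; exact: leq_addl.
have [U1 A1] := buildK (Hsz _ _ Hx1 Hy1).
have [U2 A2] := buildK (Hsz _ _ Hx2 Hy2).
have Ei : i1 = i2 by rewrite -A1 -A2 Hb.
subst i2; congr existT; by rewrite -U1 -U2 Hb.
Qed.

Lemma gen_size n : forall c v, sumn v = n -> c + wsum v = n ->
  size (gen n c v) * P v = if n == 0 then 1 else c * n.-1`!.
Proof.
elim: n => [|n IH] c v Hs Hb.
  have -> : c = 0 by lia.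
  by rewrite /= sumn0_P.
rewrite /=; case: eqP => [-> //|/eqP Hc].
rewrite size_allpairs_dep sumnE big_map big_distrl /=.
pose T i := if n == 0 then 1 else (c.-1 + i) * n.-1`!.
rewrite (eq_big_seq (fun i => nth 0 v i * T i)); last first.
  move=> i; rewrite mem_filter => /andP [Hvi _].
  have [Hs' HP] := decrP Hvi.
  have Hn : sumn (decr v i) = n by apply: succn_inj; rewrite Hs' Hs.
  have Hbi : c.-1 + i + wsum (decr v i) = n.
    have := wsum_decr Hvi; lia.
  by rewrite -HP mulnA IH // mulnC.
rewrite big_filter big_mkcond /=.
rewrite (eq_bigr (fun i => nth 0 v i * T i)); last first.
  by move=> i _; case: ifP => // /negbT; rewrite -leqNgt leqn0 => /eqP ->.
rewrite /T; case: eqP => [En|/eqP En].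
  rewrite (eq_bigr (fun i => nth 0 v i)); last by move=> i _; rewrite muln1.
  rewrite -sumn_iota Hs En /=.
  subst n; move/eqP: Hc => Hc; rewrite /= muln1; lia.
rewrite (eq_bigr (fun i => (c.-1 * n.-1`!) * nth 0 v i + n.-1`! * (i * nth 0 v i)));
  last by move=> i _; rewrite mulnDl; lia.
rewrite big_split /= -!big_distrr /= -sumn_iota -/(wsum v) Hs.
clear T; case: n IH Hs Hb En => // n _ Hs Hb _ /=.
rewrite factS; set X := n`!.
have : wsum v = n.+2 - c by lia.
move=> ->; case: c Hc Hb => // c _ Hb /=.
nia.
Qed.

Lemma iota_ord k (F : nat -> nat) : \sum_(i <- iota 0 k) F i = \sum_(i < k) F i.
Proof. by rewrite -(big_mkord (fun _ => true)) /index_iota subn0. Qed.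

Lemma sumn_ord ms : sumn ms = \sum_(i < size ms) nth 0 ms i.
Proof. by rewrite sumn_iota iota_ord. Qed.

Lemma wsum2 a b ms : wsum (a :: b :: ms) = b + \sum_(i < size ms) (i + 2) * nth 0 ms i.
Proof.
rewrite /wsum -(iota_ord _ (fun i => (i + 2) * nth 0 ms i)).
rewrite /= !big_cons /= mul0n add0n mul1n; congr (_ + _).
have -> : iota 2 (size ms) = map (addn 2) (iota 0 (size ms)) by rewrite -iotaDl.
rewrite big_map; apply: eq_bigr => i _; by rewrite add2n addnC.

Qed.

Lemma S21 ms : \sum_(i<size ms) (i+2) * nth 0 ms i =
  \sum_(i<size ms) (i+1)*nth 0 ms i + sumn ms.
Proof.
rewrite sumn_ord -big_split /=; apply: eq_bigr => i _.
rewrite !mulnDl; lia.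
Qed.

Lemma In_mem (T : eqType) (x : T) s : In x s <-> x \in s.
Proof.
elim: s => [|y s IH] //=; rewrite in_cons; split.
  by case=> [->|/IH ->]; rewrite ?eqxx ?orbT.
by case/orP => [/eqP ->|/IH]; [left|right].
Qed.

Lemma uniq_NoDup (T : eqType) (s : seq T) : uniq s -> NoDup s.
Proof.
elim: s => [|x s IH] /=; first by constructor.
by case/andP => Hx Hu; constructor; [rewrite In_mem; exact/negP | exact: IH].
Qed.

Lemma nodes_single k t : fn k [:: t] = nodes k t.
Proof. by rewrite /fn /= addn0. Qed.

Theorem mainTheorem3 (m1 : nat) (ms : seq nat) :
  exists s : list tubdigon,
    NoDup s /\
    (forall t, In t s <-> has_type m1 ms t) /\
    size s * ((V_of ms).-1 `! * m1 `! * \prod_(x <- ms) x `!) = (E_of m1 ms).-1 `!.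
Proof.
set L := (V_of ms).-1.
set v := [:: L, m1 & ms].
set n := sumn v.
have HL : L = 1 + \sum_(i < size ms) (i + 1) * nth 0 ms i by rewrite /L /V_of.
have Hn : n = E_of m1 ms.
  rewrite /n /E_of /= HL S21; lia.
have Hbal : 1 + wsum v = n.
  rewrite /n wsum2 /= HL S21; lia.
exists [seq head Null f | f <- gen n 1 v]; split; last split.
- apply: uniq_NoDup; rewrite map_inj_in_uniq; first exact: gen_uniq.
  move=> f g /(gen_spec _ _ erefl) [Hf _] /(gen_spec _ _ erefl) [Hg _].
  by case: f g Hf Hg => [|x [|]] // [|y [|]] //= _ _ ->.
- move=> t; rewrite In_mem; split.
    case/mapP => f /(gen_spec _ _ erefl) [Hf Hk] ->.
    case: f Hf Hk => [|x [|]] // _ Hk /=.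
    split; first by move: (Hk 1); rewrite nodes_single.
    case=> [|[|k]] // _; move: (Hk k.+2); rewrite nodes_single /nodes /= => ->; by rewrite !subSS subn0.
  move=> [H1 H2].
  set vt := [:: leaves t, m1 & ms].
  have Hmem : [:: t] \in gen (sumn vt) 1 vt.
    apply/gen_spec => //; split => // k; rewrite nodes_single.
    case: k => [|[|k]]; rewrite /nodes //=; by rewrite H2 // !subSS subn0.
  have := gen_bal erefl Hmem; rewrite /vt wsum2 /= => Hb.
  have Ht : leaves t = L.
    move: Hb Hbal; rewrite /n wsum2 /= HL S21; lia.
  have -> : t = head Null [:: t] by [].
  apply: map_f; move: Hmem; rewrite /vt Ht //.
- rewrite size_map -(mulnA L`!).
  have -> : L`! * (m1`! * \prod_(x <- ms) x`!) = P v by rewrite /P !big_cons.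
  rewrite gen_size // -Hn.
  have : n != 0 by rewrite -Hbal.
  by case: (n) => //= n' _; rewrite mul1n.
Qed.
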